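(* The element $\Omega = qABC+q^2A^2+q^{-2}B^2+q^2C^2-qA\alpha-q^{-1}B\beta-qC\gamma$ of $\Delta$ is fixed by every element of ${\rm PSL}_2(\mathbb Z)$ under the action in which $\rho$ sends $A\mapsto B$, $B\mapsto C$, $C\mapsto A$, $\alpha\mapsto\beta$, $\beta\mapsto\gamma$, $\gamma\mapsto\alpha$ and $\sigma$ sends $A\mapsto B$, $B\mapsto A$, $C\mapsto C+\frac{AB-BA}{q-q^{-1}}$, $\alpha\mapsto\beta$, $\beta\mapsto\alpha$, $\gamma\mapsto\gamma$.
   Context: Let $\mathbb F$ be a field and fix a nonzero $q\in\mathbb F$ with $q^4\neq 1$. The universal Askey--Wilson algebra $\Delta$ is the associative $\mathbb F$-algebra with 1 with generators $A,B,C$ subject to the relations that each of $A+\frac{qBC-q^{-1}CB}{q^2-q^{-2}}$, $B+\frac{qCA-q^{-1}AC}{q^2-q^{-2}}$, $C+\frac{qAB-q^{-1}BA}{q^2-q^{-2}}$ is central; $\alpha,\beta,\gamma$ denote these three central elements (in order) each multiplied by $q+q^{-1}$. ${\rm PSL}_2(\mathbb Z)$ is presented by generators $\rho,\sigma$ with relations $\rho^3=\sigma^2=1$, and the stated assignments define an action of ${\rm PSL}_2(\mathbb Z)$ on $\Delta$ by automorphisms. *)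

(* Defs.v *)
From mathcomp Require Import all_boot all_order all_algebra.
Set Implicit Arguments. Unset Strict Implicit. Unset Printing Implicit Defensive.
Import GRing.Theory.
Local Open Scope ring_scope.

Definition aw_alpha (F : fieldType) (R : algType F) (q : F) (A B C : R) : R :=
  (q + q^-1) *: (A + (q ^+ 2 - q ^- 2)^-1 *: (q *: (B * C) - q^-1 *: (C * B))).

Definition aw_beta (F : fieldType) (R : algType F) (q : F) (A B C : R) : R :=
  aw_alpha q B C A.

Definition aw_gamma (F : fieldType) (R : algType F) (q : F) (A B C : R) : R :=
  aw_alpha q C A B.

(* A, B, C satisfy the defining relations of the universal Askey--Wilson
   algebra: the three elements A + (qBC-q^-1CB)/(q^2-q^-2), ... are central. *)
Definition aw_relations (F : fieldType) (R : algType F) (q : F) (A B C : R) : Prop :=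
  [/\ forall x : R, GRing.comm x (A + (q ^+ 2 - q ^- 2)^-1 *: (q *: (B * C) - q^-1 *: (C * B))),
      forall x : R, GRing.comm x (B + (q ^+ 2 - q ^- 2)^-1 *: (q *: (C * A) - q^-1 *: (A * C)))
    & forall x : R, GRing.comm x (C + (q ^+ 2 - q ^- 2)^-1 *: (q *: (A * B) - q^-1 *: (B * A)))].

Definition Omega_expr (F : fieldType) (R : algType F) (q : F) (A B C a b c : R) : R :=
  q *: (A * B * C) + q ^+ 2 *: (A ^+ 2) + q ^- 2 *: (B ^+ 2) + q ^+ 2 *: (C ^+ 2)
  - q *: (A * a) - q^-1 *: (B * b) - q *: (C * c).

Definition aw_Omega (F : fieldType) (R : algType F) (q : F) (A B C : R) : R :=
  Omega_expr q A B C (aw_alpha q A B C) (aw_beta q A B C) (aw_gamma q A B C).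

(* Main.v *)
Require Import Defs.
From mathcomp Require Import all_boot all_order all_algebra.
From mathcomp Require Import ring.
Import GRing.Theory.
Local Open Scope ring_scope.

Section LC.
Variables (F : fieldType) (R : algType F).
Definition dl (k : nat) : nat -> F := fun j => ((j == k)%:R : F).
Definition lc (n : nat) (s : seq R) (x : nat -> F) : R := \sum_(j < n) x j *: s`_j.
Arguments dl : simpl never.
Arguments lc : simpl never.
Lemma atom n (s : seq R) k : (k < n)%N -> s`_k = lc n s (dl k).
Proof.
move=> kn; rewrite /lc (bigD1 (Ordinal kn)) //= /dl eqxx scale1r big1 ?addr0 //.
move=> j /eqP nj; case: eqP => [E|]; last by rewrite scale0r.
by case: nj; apply: val_inj.
Qed.
Lemma lcZ n s c x : c *: lc n s x = lc n s (fun j => c * x j).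
Proof. by rewrite /lc scaler_sumr; apply: eq_bigr => j _; rewrite scalerA. Qed.
Lemma lcN n s x : - lc n s x = lc n s (fun j => - x j).
Proof. by rewrite /lc -sumrN; apply: eq_bigr => j _; rewrite scaleNr. Qed.
Lemma lcD n s x y : lc n s x + lc n s y = lc n s (fun j => x j + y j).
Proof. by rewrite /lc -big_split; apply: eq_bigr => j _; rewrite scalerDl. Qed.
Lemma lc_eq n s x y : (forall j, (j < n)%N -> x j = y j) -> lc n s x = lc n s y.
Proof. by move=> h; apply: eq_bigr => j _; rewrite h. Qed.
End LC.
Arguments dl : simpl never.
Arguments lc : simpl never.

Ltac fold_lc := repeat (rewrite lcZ || rewrite lcN || rewrite lcD).

Ltac at1 s n k t := let h := fresh in
  have h := (@atom _ _ n s k isT); change (nth 0 s k) with t in h;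
  rewrite ?h; clear h.

Ltac side := rewrite ?oner_eq0 /= ?andbT; repeat (apply/andP; split); rewrite ?mulf_neq0 ?expf_neq0 ?invr_eq0 //.

Ltac close_lc := apply: lc_eq; intros jj hh;
  do 14 (destruct jj as [|jj]; [first [by move: hh | rewrite /dl /=; field; side] | ]); by move: hh.

Ltac expand := rewrite ?expr2; repeat progress rewrite ?mulrDr ?mulrDl ?mulrBr ?mulrBl
   -?scalerAl -?scalerAr ?mulrA ?scalerA ?scalerDr ?scalerBr ?mulNr ?mulrN ?scalerN.

Section Main.
Variables (F : fieldType) (R : algType F).

Lemma ruleV (u v w : R) (a b : F) : b != 0 -> a *: u - b *: v = w -> v = (a / b) *: u - b^-1 *: w.
Proof.
move=> hb <-; rewrite ?scalerBr !scalerA mulVf // scale1r opprB [b^-1 * a]mulrC addrC subrK //.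
Qed.
Lemma ruleU (u v w : R) (a b : F) : a != 0 -> a *: u - b *: v = w -> u = (b / a) *: v + a^-1 *: w.
Proof.
move=> ha <-; rewrite ?scalerBr !scalerA mulVf // scale1r [a^-1 * b]mulrC addrC subrK //.
Qed.

End Main.
Arguments ruleV {F R u v w a b}.
Arguments ruleU {F R u v w a b}.

Theorem theorem6p4 (F : fieldType) (q : F) (R : algType F) (A B C : R) :
  q != 0 -> q ^+ 4 != 1 -> aw_relations q A B C ->
  let alpha := aw_alpha q A B C in
  let beta := aw_beta q A B C in
  let gamma := aw_gamma q A B C in
  Omega_expr q B C A beta gamma alpha = aw_Omega q A B C /\
  Omega_expr q B A (C + (q - q^-1)^-1 *: (A * B - B * A)) beta alpha gamma
    = aw_Omega q A B C.
Proof.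
move=> hq h4 [hX hY hZ] alpha beta gamma.
rewrite /alpha /beta /gamma /aw_Omega /aw_beta /aw_gamma /aw_alpha.
set s := q ^+ 2 - q ^- 2.
set X := A + _ in hX *. set Y := B + _ in hY *. set Z := C + _ in hZ *.
have hs : s != 0.
  apply/negP => /eqP hs0; move/eqP: h4; apply.
  have E : q ^+ 2 = q ^- 2 by apply/eqP; rewrite -subr_eq0 -/s hs0.
  by rewrite -[4%N]/(2 + 2)%N exprD {1}E mulVf // expf_neq0.
have RX : q *: (B * C) - q^-1 *: (C * B) = s *: (X - A).
  by rewrite /X [_ + (_ *: _)]addrC addrK scalerA mulfV // scale1r.
have RY : q *: (C * A) - q^-1 *: (A * C) = s *: (Y - B).
  by rewrite /Y [_ + (_ *: _)]addrC addrK scalerA mulfV // scale1r.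
have RZ : q *: (A * B) - q^-1 *: (B * A) = s *: (Z - C).
  by rewrite /Z [_ + (_ *: _)]addrC addrK scalerA mulfV // scale1r.
have hqi : q^-1 != 0 by rewrite invr_eq0.
have CB := ruleV hqi RX. have BA := ruleV hqi RZ.
have CA := ruleU hq RY. have AB := ruleU hq RZ.
clearbody X Y Z.
have ZC : Z * C = C * Z by rewrite (hZ C).
split.
  rewrite /Omega_expr -(mulrA B C A) CA; expand. rewrite BA; expand.
  rewrite ?ZC.
  set s1 := [:: A * B * C; C * Z; B * Y; A * X; A * A; B * B; C * C].
  at1 s1 7%N 0%N (A * B * C). at1 s1 7%N 1%N (C * Z). at1 s1 7%N 2%N (B * Y).
  at1 s1 7%N 3%N (A * X). at1 s1 7%N 4%N (A * A). at1 s1 7%N 5%N (B * B).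
  at1 s1 7%N 6%N (C * C). 
  fold_lc.
  close_lc.
have hd : q - q^-1 != 0.
  apply: contraNneq hs => hd0; by rewrite /s -exprVn subr_sqr hd0 mul0r.
have hq2 : q * q - 1 != 0.
  apply: contraNneq hd => e.
  have -> : q - q^-1 = (q * q - 1) / q by field.
  by rewrite e mul0r.
have YB : Y * B = B * Y by rewrite (hY B).
set Cp := C + _.
have BAe : B * A = (- q) *: Cp + (q + q^-1) *: Z - q^-1 *: C.
  rewrite /Cp AB; expand.
  set s2 := [:: B * A; Z; C].
  at1 s2 3%N 0%N (B * A). at1 s2 3%N 1%N Z. at1 s2 3%N 2%N C.
  fold_lc. close_lc.
have Cpe : Cp = (- q) *: (A * B) + (q * q + 1) *: Z - (q * q) *: C.
  rewrite /Cp BA; expand.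
  set s2 := [:: A * B; Z; C].
  at1 s2 3%N 0%N (A * B). at1 s2 3%N 1%N Z. at1 s2 3%N 2%N C.
  fold_lc. close_lc.
clearbody Cp.
have Int : Omega_expr q B A Cp ((q + q^-1) *: Y) ((q + q^-1) *: X) ((q + q^-1) *: Z)
  = - (C * Cp) + (q ^+ 2) *: (B * B) + (q ^- 2) *: (A * A)
    - (q * (q + q^-1)) *: (B * Y) - (q^-1 * (q + q^-1)) *: (A * X).
  rewrite /Omega_expr BAe; expand. rewrite -(hZ Cp).
  set s2 := [:: Cp * Cp; Cp * Z; C * Cp; B * B; A * A; B * Y; A * X].
  at1 s2 7%N 0%N (Cp * Cp). at1 s2 7%N 1%N (Cp * Z). at1 s2 7%N 2%N (C * Cp).
  at1 s2 7%N 3%N (B * B). at1 s2 7%N 4%N (A * A). at1 s2 7%N 5%N (B * Y).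
  at1 s2 7%N 6%N (A * X).
  fold_lc. close_lc.
rewrite Int Cpe /Omega_expr; expand. rewrite CA; expand. rewrite -(mulrA A C B) CB; expand.
rewrite ?YB ?ZC.
set s1 := [:: A * B * C; C * Z; B * Y; A * X; A * A; B * B; C * C].
at1 s1 7%N 0%N (A * B * C). at1 s1 7%N 1%N (C * Z). at1 s1 7%N 2%N (B * Y).
at1 s1 7%N 3%N (A * X). at1 s1 7%N 4%N (A * A). at1 s1 7%N 5%N (B * B).
at1 s1 7%N 6%N (C * C).
fold_lc. close_lc.
Qed.
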